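(* Let $\{U_N(i)\}_{i=1}^{M_N}$, $N\ge1$, be a triangular array and $\{\mathcal F_N\}$ a filtration as described. Assume there exist nonnegative random variables $V_N,X_N,Y_N$ such that (i) $\max_{i\le M_N}|U_N(i)|\le V_N+X_NY_N^2$ a.s. for all $N$; (ii) $V_N$ and $X_N$ are $\mathcal F_N$-measurable, $V_N\to0$ in probability, and $\lim_{\lambda\to\infty}\sup_N\mathbb P(X_N\ge\lambda)=0$; (iii) for some $\alpha\in\{1,2\}$, $\nu>0$, $c>0$, $C>0$, a.s. for all $y>0$ and $N$, $\mathbb P(Y_N\ge y\mid\mathcal F_N)\le CM_N\exp(-cM_N^{\nu}y^{2\alpha})$. Then for $p\in\{1,2\}$: if $\lim_{\lambda\to\infty}\sup_N\mathbb P\big(\sum_{i=1}^{M_N}\mathbb E[|U_N(i)|^p\mid\mathcal F_N]\ge\lambda\big)=0$, then for every $\varepsilon>0$, $$\sum_{i=1}^{M_N}\mathbb E\big[|U_N(i)|^p\mathbf 1\{|U_N(i)|\ge\varepsilon\}\mid\mathcal F_N\big]\to0\quad\text{in probability as }N\to\infty.$$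
   Context: $(\Omega,\mathcal A,\{\mathcal F_N\}_{N\ge0},\mathbb P)$ is a filtered probability space and $\{M_N\}$ a sequence of positive integers with $M_N\to\infty$. For each $N$, $U_N(1),\dots,U_N(M_N)$ are real random variables that are conditionally independent given $\mathcal F_N$ with $\mathbb E[|U_N(i)|\mid\mathcal F_N]<\infty$ a.s. (and $\mathbb E[U_N(i)^2\mid\mathcal F_N]<\infty$ a.s. when $p=2$). *)

(* Defs.v *)
From HB Require Import structures.
From mathcomp Require Import all_boot all_order all_algebra.
From mathcomp Require Import all_classical all_reals all_analysis measurable_realfun.
Set Implicit Arguments. Unset Strict Implicit. Unset Printing Implicit Defensive.
Import Order.TTheory GRing.Theory Num.Theory.
Import numFieldNormedType.Exports.
Local Open Scope classical_set_scope.
Local Open Scope ring_scope.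

Definition sub_sigma_algebra d (T : measurableType d) (G : set (set T)) :=
  sigma_algebra setT G /\ G `<=` measurable.

Definition filtration d (T : measurableType d) (F : nat -> set (set T)) :=
  (forall N, sub_sigma_algebra (F N)) /\ (forall N, F N `<=` F N.+1).

Definition G_measurable d (T : measurableType d) (R : realType)
  (G : set (set T)) (Z : T -> \bar R) :=
  forall B : set (\bar R), measurable B -> G (Z @^-1` B).

(** [Z] is a version of the conditional expectation E[X | G], for a
    nonnegative (extended-real valued) random variable X:
    Z is G-measurable and int_A Z dP = int_A X dP for every A in G. *)
Definition is_cond_exp d (T : measurableType d) (R : realType)
  (P : probability T R) (G : set (set T)) (X Z : T -> \bar R) :=
  G_measurable G Z /\
  forall A, G A -> (\int[P]_(x in A) Z x = \int[P]_(x in A) X x)%E.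

Definition cond_exp_finite d (T : measurableType d) (R : realType)
  (P : probability T R) (G : set (set T)) (X : T -> \bar R) :=
  forall Z, is_cond_exp P G X Z -> {ae P, forall x, (Z x < +oo)%E}.

(** Conditional independence of X_0, ..., X_{n-1} given G:
    for all Borel sets B_i, P(cap_i {X_i in B_i} | G) = prod_i P(X_i in B_i | G)
    a.s. (stated as: the product of any versions of the conditional
    probabilities is a version of the joint conditional probability). *)
Definition cond_indep d (T : measurableType d) (R : realType)
  (P : probability T R) (G : set (set T)) (n : nat) (X : 'I_n -> T -> R) :=
  forall (B : 'I_n -> set R), (forall i, measurable (B i)) ->
  forall q : 'I_n -> T -> \bar R,
    (forall i, is_cond_exp P G (fun x => (\1_(X i @^-1` B i) x)%:E) (q i)) ->
    is_cond_exp P G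
      (fun x => (\1_(\bigcap_(i in [set: 'I_n]) (X i @^-1` B i)) x)%:E)
      (fun x => (\prod_(i < n) q i x)%E).

Definition cvg_in_prob0 d (T : measurableType d) (R : realType)
  (P : probability T R) (Z : nat -> T -> \bar R) :=
  forall delta : R, 0 < delta ->
    (fun N => P [set x | (delta%:E <= `|Z N x|)%E]) @ \oo --> 0%E.

Definition tight d (T : measurableType d) (R : realType)
  (P : probability T R) (Z : nat -> T -> \bar R) :=
  (fun lambda : R =>
     ereal_sup [set P [set x | (lambda%:E <= Z N x)%E] | N in [set: nat]])
  @ +oo --> 0%E.

(* Main.v *)
Require Import Defs.
From HB Require Import structures.
From mathcomp Require Import all_boot all_order all_algebra.
From mathcomp Require Import all_classical all_reals all_analysis measurable_realfun.
From mathcomp Require Import lra ring.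
Set Implicit Arguments. Unset Strict Implicit. Unset Printing Implicit Defensive.
Import Order.TTheory GRing.Theory Num.Theory.
Import numFieldNormedType.Exports.
Local Open Scope classical_set_scope.
Local Open Scope ring_scope.

Section sig.
Context d (T : measurableType d).

Lemma sigmaC (G : set (set T)) A : Defs.sub_sigma_algebra G -> G A -> G (~` A).
Proof. by move=> [[_ GC _] _] /GC; rewrite setTD. Qed.

Lemma sigmaU (G : set (set T)) A B : Defs.sub_sigma_algebra G -> G A -> G B -> G (A `|` B).
Proof.
move=> [[G0 _ GU] _] GA GB; rewrite -bigcup2E; apply: GU => -[|[|n]] //=.
Qed.

Lemma sigmaI (G : set (set T)) A B : Defs.sub_sigma_algebra G -> G A -> G B -> G (A `&` B).
Proof.
move=> sG GA GB; rewrite -[A `&` B]setCK setCI.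
by apply: sigmaC => //; apply: sigmaU => //; apply: sigmaC.
Qed.

Lemma sigmaT (G : set (set T)) : Defs.sub_sigma_algebra G -> G setT.
Proof. by move=> sG; rewrite -setC0; apply: sigmaC => //; case: sG => [[]]. Qed.

Lemma sigma_meas (G : set (set T)) A : Defs.sub_sigma_algebra G -> G A -> measurable A.
Proof. by move=> [_ +] GA; apply. Qed.

End sig.

Section t.
Context d (T : measurableType d) (R : realType) (P : probability T R).
Local Open Scope ereal_scope.
Lemma meas_ge0 : measurable [set y : \bar R | 0 <= y].
Proof. have := @emeasurable_itv R `[0%E, +oo[%O. by rewrite set_itvE. Qed.
Lemma meas_lt0 : measurable [set y : \bar R | y < 0].
Proof. have := @emeasurable_itv R `]-oo, 0%E[%O. by rewrite set_itvE. Qed.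

Lemma Gmeas_mfun (G : set (set T)) (Z : T -> \bar R) :
  Defs.sub_sigma_algebra G -> G_measurable G Z -> measurable_fun setT Z.
Proof. by move=> [_ sG] hZ _ B mB; rewrite setTI; apply: sG; apply: hZ. Qed.

Lemma cond_abs (G : set (set T)) (Xf Z : T -> \bar R) A :
  Defs.sub_sigma_algebra G -> (forall x, 0 <= Xf x) -> is_cond_exp P G Xf Z -> G A ->
  exists A', [/\ G A', A' `<=` A & \int[P]_(x in A) `|Z x| = \int[P]_(x in A') Xf x].
Proof.
move=> sG Xf0 [hZm hZ] GA.
have mZ := Gmeas_mfun sG hZm.
have mA : measurable A by case: sG => _; apply.
set S1 := [set x | 0 <= Z x]; set S2 := [set x | Z x < 0].
have GS1 : G S1 by exact: (hZm _ meas_ge0).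
have GS2 : G S2 by exact: (hZm _ meas_lt0).
have GA1 : G (A `&` S1) by apply: sigmaI.
have GA2 : G (A `&` S2) by apply: sigmaI.
have mA1 : measurable (A `&` S1) by case: sG => _; apply.
have mA2 : measurable (A `&` S2) by case: sG => _; apply.
exists (A `&` S1); split => //.
have -> : (fun x => `|Z x|) = (Z^\+ \+ Z^\-) by rewrite -fune_abse.
rewrite ge0_integralD//; last 2 first.
  - by apply: measurable_funS (measurable_funepos mZ).
  - by apply: measurable_funS (measurable_funeneg mZ).
have e1 : \int[P]_(x in A) Z^\+ x = \int[P]_(x in A `&` S1) Xf x.
  rewrite -hZ// [RHS]integralE.
  have -> : \int[P]_(x in A `&` S1) Z^\- x = 0.
    apply: integral0_eq => x [_ /= Zx].
    by rewrite funenegE /= max_r // oppe_le0.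
  rewrite sube0 [RHS]integral_mkcondr; apply: eq_integral => x _.
  rewrite /patch; case: ifPn => // /negP; rewrite inE /S1 /= => /negP; rewrite -ltNge => Zx.
  by rewrite funeposE /= max_r ?ltW.
have e2 : \int[P]_(x in A) Z^\- x = 0.
  have h : \int[P]_(x in A `&` S2) Z x = - \int[P]_(x in A `&` S2) Z^\- x.
    rewrite integralE integral0_eq ?add0e// => x [_ /= Zx].
    by rewrite funeposE /= max_r ?ltW.
  have h0 : 0 <= \int[P]_(x in A `&` S2) Z x by rewrite hZ//; apply: integral_ge0.
  have h1 : \int[P]_(x in A `&` S2) Z^\- x = 0.
    apply/eqP; rewrite eq_le; apply/andP; split; last first.
      by apply: integral_ge0 => x _; exact: funeneg_ge0.
    by rewrite -oppe_ge0 -h.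
  rewrite -h1 integral_mkcondr; apply: eq_integral => x _.
  rewrite /patch; case: ifPn => // /negP; rewrite inE /S2 /= => /negP; rewrite -leNgt => Zx.
  by rewrite funenegE /= max_r // oppe_le0.
by rewrite e1 e2 adde0.
Qed.

Lemma markov_split (S : T -> \bar R) (G : set T) (delta : R) :
  measurable G -> measurable_fun setT S -> (0 < delta)%R ->
  P [set x | delta%:E <= `|S x|] <= P (~` G) + (delta^-1)%:E * \int[P]_(x in G) `|S x|.
Proof.
move=> mG mS d0.
have mD : measurable [set x | delta%:E <= `|S x|].
  rewrite -[X in measurable X]setTI.
  by apply: emeasurable_fun_c_infty => //; exact: measurableT_comp.
have mGD : measurable (G `&` [set x | delta%:E <= `|S x|]) by exact: measurableI.
apply: (@le_trans _ _ (P (G `&` [set x | delta%:E <= `|S x|] `|` ~` G))).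
  apply: le_measure; rewrite ?inE//; first by apply: measurableU => //; exact: measurableC.
  by move=> x Dx; have [Gx|nGx] := pselect (G x); [left|right].
apply: le_trans; first by apply: measureU2 => //; exact: measurableC.
rewrite addeC leeD2l// lee_pdivlMl//.
apply: le_integral_abse => //.
exact: measurable_funS mS.
Qed.
End t.

Section r.
Context (R : realType).

Lemma R1 (eps K Yv u : R) (p : nat) : 0 < eps -> 0 < K -> 0 <= Yv ->
  (p = 1%N \/ p = 2%N) -> 0 <= u -> u <= eps/2 + K * Yv ^+ 2 ->
  u ^+ p <= (1 + eps/2 + K) ^+ 2 * (1 + Yv) ^+ 4.
Proof.
move=> e0 K0 Y0 hp u0 hu.
have h1 : 1 <= (1 + Yv) ^+ 2 by rewrite exprn_ege1// lerDl.
have hY : Yv ^+ 2 <= (1 + Yv) ^+ 2 by rewrite lerXn2r ?nnegrE ?addr_ge0// lerDr.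
have hb : u <= (1 + eps/2 + K) * (1 + Yv) ^+ 2.
  have e2 : 0 < eps / 2 by rewrite divr_gt0.
  move: h1 hY hu e2; set Z := (1 + Yv) ^+ 2; set W := Yv ^+ 2; set e := eps / 2 => h1 hY hu' e2.
  nra.
have hb1 : 1 <= (1 + eps/2 + K) * (1 + Yv) ^+ 2.
  have e2 : 0 < eps / 2 by rewrite divr_gt0.
  move: h1 e2; set Z := (1 + Yv) ^+ 2; set e := eps / 2 => h1 e2; nra.
have -> : (1 + eps / 2 + K) ^+ 2 * (1 + Yv) ^+ 4 = ((1 + eps/2 + K) * (1 + Yv) ^+ 2) ^+ 2.
  by rewrite exprMn -exprM.
case: hp => ->.
  by rewrite expr1; apply: (le_trans hb); rewrite ler_eXnr.
by rewrite lerXn2r ?nnegrE// (le_trans _ hb1).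
Qed.

Lemma R2 (Yv : R) : 0 <= Yv -> (1 + Yv) ^+ 4 <= expR (4 * Yv).
Proof.
move=> Y0; rewrite -[4]/(4%:R) expRM_natl.
apply: lerXn2r; rewrite ?nnegrE ?expR_ge0 ?addr_ge0//.
exact: expR_ge1Dx.
Qed.

Lemma R3 (s y0 c m : R) (n : nat) : 0 < y0 -> y0 <= s -> 0 < c -> 0 < m -> (0 < n)%N ->
  5 <= c * m * y0 ^+ n / (2 * y0) ->
  4 * s - c * m * s ^+ n <= - (c * m * y0 ^+ n / 2) - s.
Proof.
move=> y00 ys c0 m0 n0 h5.
have s0 : 0 < s by exact: lt_le_trans y00 ys.
have h1 : y0 ^+ n <= s ^+ n by apply: lerXn2r => //; rewrite nnegrE ltW.
have h2 : y0 ^+ n * (s / y0) <= s ^+ n.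
  have -> : s ^+ n = y0 ^+ n * (s / y0) ^+ n by rewrite -exprMn mulrCA divff ?mulr1 // gt_eqF.
  apply: ler_wpM2l; first by rewrite exprn_ge0 // ltW.
  by apply: ler_eXnr => //; rewrite ler_pdivlMr // mul1r.
have cm0 : 0 < c * m by rewrite mulr_gt0.
have h3 : 5 * s <= c * m * s ^+ n / 2.
  apply: (le_trans (ler_wpM2r (ltW s0) h5)).
  have -> : c * m * y0 ^+ n / (2 * y0) * s = (c * m / 2) * (y0 ^+ n * (s / y0)).
    by field; rewrite gt_eqF.
  have -> : c * m * s ^+ n / 2 = (c * m / 2) * s ^+ n by rewrite mulrAC.
  by apply: ler_wpM2l => //; rewrite divr_ge0 // ltW.
have h4 : c * m * y0 ^+ n / 2 <= c * m * s ^+ n / 2.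
  by rewrite ler_pM2r// ler_pM2l.
have -> : c * m * s ^+ n = c * m * s ^+ n / 2 + c * m * s ^+ n / 2 by rewrite -splitr.
lra.
Qed.

Lemma R4 (y0 : R) (k : nat) : 0 <= y0 -> expR (- (y0 + k%:R)) <= 2 / (2 ^ (k + 1))%:R.
Proof.
move=> y00.
apply: (@le_trans _ _ (expR (- k%:R))); first by rewrite ler_expR lerN2 lerDr.
have -> : 2 / (2 ^ (k + 1))%:R = ((2:R) ^+ k)^-1 :> R.
  by rewrite natrX addn1 exprSr invfM mulrC -mulrA mulVf ?mulr1.
rewrite expRN -[k%:R]mulr1 expRM_natl.
rewrite lef_pV2 ?posrE ?exprn_gt0 ?expR_gt0//.
apply: lerXn2r; rewrite ?nnegrE ?expR_ge0//.
by have := expR_ge1Dx (1 : R).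
Qed.
End r.

Section tb.
Context d (T : measurableType d) (R : realType) (P : probability T R).

Lemma meas_ge (f : T -> R) (a : R) : measurable_fun setT f -> measurable [set w | a <= f w].
Proof.
move=> mf; have := mf measurableT _ (measurable_itv `[a, +oo[).
rewrite setTI; congr measurable; apply/seteqP; split => x /=; by rewrite in_itv /= andbT.
Qed.

Lemma single_le_series (f : nat -> \bar R) k : (forall i, (0 <= f i)%E) ->
  (f k <= \sum_(i <oo) f i)%E.
Proof.
move=> f0; apply: (@le_trans _ _ (\sum_(0 <= i < k.+1) f i)%E).
  by rewrite big_nat_recr//= leeDr// sume_ge0.
exact: nneseries_lim_ge.
Qed.

Lemma geom_sum (r : R) : (\sum_(k <oo) (r / (2 ^ (k + 1))%:R)%:E = r%:E)%E.
Proof.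
have := @cvg_geometric_eseries_half R r 0; rewrite expr0 divr1 => /cvg_lim <- //.
Qed.


Lemma int_q_le (q : T -> \bar R) (A : set T) (B : R) : measurable A ->
  measurable_fun setT q -> (0 <= B)%R ->
  {ae P, forall x, (q x <= B%:E)%E} ->
  (\int[P]_(x in A) q x <= B%:E)%E.
Proof.
move=> mA mq B0 hq; rewrite integralE.
apply: (@le_trans _ _ (\int[P]_(x in A) q^\+ x)%E).
  have h0 : (0 <= \int[P]_(x in A) q^\- x)%E by apply: integral_ge0 => x _; exact: funeneg_ge0.
  by have := leeB (lexx (\int[P]_(x in A) q^\+ x)%E) h0; rewrite sube0.
apply: (@le_trans _ _ (\int[P]_(x in A) (cst B%:E) x)%E).
  apply: ae_ge0_le_integral => //.
  - exact: measurable_funS (measurable_funepos mq).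
  - apply: filterS hq => x hx _; rewrite funeposE /=.
    by rewrite ge_max hx lee_fin B0.
rewrite integral_cst // -[leRHS]mule1 lee_wpmul2l ?lee_fin//.
exact: probability_le1.
Qed.

Lemma tail_bound (U V X Y : T -> R) (q : R -> T -> \bar R) (A : set T)
    (eps K C c m Mr : R) (p n : nat) :
  measurable A -> measurable_fun setT U -> measurable_fun setT Y ->
  (forall x, 0 <= Y x) -> (forall y, 0 < y -> measurable_fun setT (q y)) ->
  0 < eps -> 0 < K -> 0 < c -> 0 < m -> 0 < C -> 0 <= Mr ->
  (p = 1%N \/ p = 2%N) -> (0 < n)%N ->
  (forall x, A x -> V x < eps / 2 /\ X x < K) ->
  {ae P, forall x, `|U x| <= V x + X x * Y x ^+ 2} ->
  (forall y, 0 < y -> (\int[P]_(x in A) (\1_[set w | y <= Y w] x)%:E =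
                      \int[P]_(x in A) q y x)%E) ->
  {ae P, forall x, forall y, 0 < y ->
      (q y x <= (C * Mr * expR (- c * m * y ^+ n))%:E)%E} ->
  5 <= c * m * (Num.sqrt (eps / (2 * K))) ^+ n / (2 * Num.sqrt (eps / (2 * K))) ->
  (\int[P]_(x in A) (`|U x| ^+ p * \1_[set w | eps <= `|U w|] x)%:E <=
   (2 * ((1 + eps / 2 + K) ^+ 2 * expR 4) * C * Mr
       * expR (- (c * m * (Num.sqrt (eps / (2 * K))) ^+ n / 2)))%:E)%E.
Proof.
move=> mA mU mY Y0 mq e0 K0 c0 m0 C0 Mr0 hp n0 hA hi hq hqb.
set y0 := Num.sqrt (eps / (2 * K)) => h5.
have y00 : 0 < y0 by rewrite sqrtr_gt0 divr_gt0 ?mulr_gt0.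
set D := (1 + eps / 2 + K) ^+ 2.
have D0 : 0 <= D by rewrite exprn_ge0 //; have := divr_gt0 e0 (ltr0Sn R 1); lra.
set s := fun k : nat => y0 + k%:R.
have s0 k : 0 < s k by have := ler0n R k; rewrite /s; lra.
set w := fun k : nat => D * expR 4 * expR (4 * s k).
have w0 k : 0 <= w k by rewrite /w mulr_ge0 ?expR_ge0 // mulr_ge0 ?expR_ge0.
set f := fun (k : nat) x => (w k * \1_[set w | s k <= Y w] x)%:E.
have f0 k x : (0 <= f k x)%E by rewrite lee_fin mulr_ge0.
have mS k : measurable [set w | s k <= Y w] by exact: meas_ge.
have mf k : measurable_fun setT (f k).
  apply/measurable_EFinP; apply: measurable_funM => //; exact: measurable_indic.
have mSe : measurable [set w | eps <= `|U w|] by apply: meas_ge; exact: measurableT_comp.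
apply: (@le_trans _ _ (\int[P]_(x in A) \sum_(k <oo) f k x)%E).
  apply: ae_ge0_le_integral => //.
  - apply: measurable_funS (_ : measurable_fun setT _) => //.
    apply/measurable_EFinP; apply: measurable_funM.
      by apply: measurable_funX; exact: measurableT_comp.
    exact: measurable_indic.
  - by move=> x _; apply: nneseries_ge0.
  - apply: measurable_funS (_ : measurable_fun setT _) => //.
    exact: (ge0_emeasurable_sum (fun k x _ _ => f0 k x) (fun k _ => mf k)).
  apply: filterS hi => x hx Ax.
  have [hV hX] := hA x Ax.
  have hXY : X x * Y x ^+ 2 <= K * Y x ^+ 2 by apply: ler_wpM2r; [exact: sqr_ge0|exact: ltW].
  have [he|he] := leP eps `|U x|; last first.
    rewrite indicE memNset /=; last by apply/negP; rewrite -ltNge.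
    by rewrite mulr0; apply: nneseries_ge0.
  rewrite indicE mem_set // mulr1.
  have hU : `|U x| <= eps / 2 + K * Y x ^+ 2 by lra.
  have hYK : eps / 2 < K * Y x ^+ 2 by lra.
  have hY2 : y0 ^+ 2 < Y x ^+ 2.
    rewrite sqr_sqrtr; last by rewrite divr_ge0 ?mulr_ge0 // ltW.
    rewrite ltr_pdivrMr ?mulr_gt0 //; lra.
  have hy0Y : y0 < Y x.
    rewrite ltNge; apply/negP => hle.
    have := lerXn2r 2 (Y0 x : Y x \in Num.nneg) (ltW y00 : y0 \in Num.nneg) hle; lra.
  have hYy : 0 <= Y x - y0 by lra.
  have [hk1 hk2] := andP (truncn_itv hYy).
  set k := Num.truncn (Y x - y0) in hk1 hk2.
  apply: (@le_trans _ _ (f k x)); last exact: single_le_series.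
  rewrite /f indicE mem_set /=; last by rewrite /s; lra.
  rewrite mulr1 lee_fin.
  apply: (le_trans (R1 e0 K0 (Y0 x) hp (normr_ge0 _) hU)).
  rewrite -/D /w -mulrA ler_wpM2l //.
  apply: (le_trans (R2 (Y0 x))).
  rewrite -expRD ler_expR.
  have : Y x <= s k + 1 by rewrite /s; move: hk2; rewrite -natr1; lra.
  lra.
rewrite integral_nneseries //; last by move=> k; exact: measurable_funS (mf k).
set r := 2 * (D * expR 4) * C * Mr * expR (- (c * m * y0 ^+ n / 2)).
rewrite -geom_sum; apply: lee_nneseries => [k _ _|k _].
  by apply: integral_ge0 => x _.
rewrite /f; under eq_integral do rewrite EFinM.
rewrite ge0_integralZl_EFin //; last first.
  by apply/measurable_EFinP; exact: measurable_indic.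
rewrite (hq (s k) (s0 k)).
have hqk : {ae P, forall x, (q (s k) x <= (C * Mr * expR (- c * m * s k ^+ n))%:E)%E}.
  by apply: filterS hqb => x hx; apply: hx.
have B0 : 0 <= C * Mr * expR (- c * m * s k ^+ n) by rewrite mulr_ge0 ?expR_ge0 // mulr_ge0 // ltW.
apply: le_trans; first by apply: lee_wpmul2l; [rewrite lee_fin|exact: (int_q_le mA (mq _ (s0 k)) B0 hqk)].
rewrite -EFinM lee_fin.
have e1 : expR (4 * s k) * expR (- c * m * s k ^+ n) <=
          expR (- (c * m * y0 ^+ n / 2)) * (2 / (2 ^ (k + 1))%:R).
  rewrite -expRD; apply: (@le_trans _ _ (expR (- (c * m * y0 ^+ n / 2) - s k))).
    have ys : y0 <= s k by rewrite /s lerDl.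
    rewrite ler_expR; have := R3 y00 ys c0 m0 n0 h5.
    by rewrite !mulNr; lra.
  rewrite expRD; apply: ler_wpM2l; first exact: expR_ge0.
  exact: R4 (ltW y00).
have -> : w k * (C * Mr * expR (- c * m * s k ^+ n)) =
   (D * expR 4 * C * Mr) * (expR (4 * s k) * expR (- c * m * s k ^+ n)) by rewrite /w; ring.
have -> : r / (2 ^ (k + 1))%:R =
   (D * expR 4 * C * Mr) * (expR (- (c * m * y0 ^+ n / 2)) * (2 / (2 ^ (k + 1))%:R)) by rewrite /r; ring.
apply: ler_wpM2l => //; rewrite !mulr_ge0 ?expR_ge0 // ltW.
all: by [|have := divr_gt0 e0 (ltr0Sn R 1); lra].
Qed.
End tb.

Section asy.
Context (R : realType).

Lemma asym_real (a nu : R) : 0 < a -> 0 < nu -> exists2 c0, 0 < c0 &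
  forall x, 1 <= x -> x ^+ 2 * expR (- (a * x `^ nu)) <= c0 / x.
Proof.
move=> a0 nu0; set r := 3 / nu.
have r0 : 0 < r by rewrite divr_gt0.
set k := (a / r) `^ r.
have k0 : 0 < k by rewrite powR_gt0 // divr_gt0.
exists k^-1; first by rewrite invr_gt0.
move=> x x1.
have x0 : 0 < x by lra.
have hx : 0 <= x `^ nu by exact: powR_ge0.
have he : k * x ^+ 3 <= expR (a * x `^ nu).
  have -> : a * x `^ nu = (a * x `^ nu / r) * r by rewrite divfK // gt_eqF.
  rewrite expRM.
  apply: (@le_trans _ _ ((a * x `^ nu / r) `^ r)); last first.
    apply: ge0_ler_powR; rewrite ?nnegrE ?expR_ge0 ?ltW //.
    - by apply: divr_gt0 => //; apply: mulr_gt0 => //; apply: powR_gt0.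
    by have := expR_ge1Dx (a * x `^ nu / r); lra.
  have -> : a * x `^ nu / r = (a / r) * x `^ nu by rewrite mulrAC.
  have ar : 0 <= a / r by rewrite divr_ge0 // ltW.
  rewrite (powRM _ ar hx) -powRrM.
  have -> : nu * r = 3%:R by rewrite /r mulrC divfK // gt_eqF.
  by rewrite powR_mulrn // ltW.
rewrite expRN.
apply: (@le_trans _ _ (x ^+ 2 / (k * x ^+ 3))).
  apply: ler_wpM2l; first by rewrite exprn_ge0 // ltW.
  by rewrite lef_pV2 // posrE ?expR_gt0 // mulr_gt0 // exprn_gt0.
have -> : x ^+ 2 / (k * x ^+ 3) = k^-1 / x by field; rewrite !gt_eqF.
by [].
Qed.
End asy.

Section cv.
Context (R : realType).

Lemma cvg0_crit (u : nat -> \bar R) : (forall N, 0 <= u N)%E ->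
  (forall e : R, 0 < e -> \forall N \near \oo, (u N <= e%:E)%E) -> u @ \oo --> 0%E.
Proof.
move=> u0 hu; apply/fine_cvgP; split.
  apply: filterS (hu 1 ltr01) => N hN.
  by rewrite ge0_fin_numE // (le_lt_trans hN) // ltey.
apply/cvgr0Pnorm_le => e e0.
apply: filterS2 (hu e e0) (hu 1 ltr01) => N hN h1.
have hf : u N \is a fin_num by rewrite ge0_fin_numE // (le_lt_trans h1) // ltey.
rewrite /= ger0_norm ?fine_ge0 //.
by have := fine_le hf (isT : (e%:E \is a fin_num)) hN.
Qed.

Lemma cvg0_near (u : nat -> \bar R) : (forall N, 0 <= u N)%E -> u @ \oo --> 0%E ->
  forall e : R, 0 < e -> \forall N \near \oo, (u N <= e%:E)%E.
Proof.
move=> u0 /fine_cvgP [hfin hc] e e0.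
have h := proj1 (cvgr0Pnorm_le _) hc e e0.
apply: filterS2 hfin (h _) => N hN1 hN2.
rewrite -(fineK hN1) lee_fin.
by move: hN2; rewrite /= ger0_norm // fine_ge0.
Qed.

Lemma pinfty_ex (Q : R -> Prop) : (\forall x \near +oo, Q x) -> exists2 K, 0 < K & Q K.
Proof.
case=> M0 [_ HM]; have h1 : 0 <= Num.max M0 0 by rewrite le_max lexx orbT.
have h2 : M0 <= Num.max M0 0 by rewrite le_max lexx.
exists (Num.max M0 0 + 1); first by lra.
by apply: HM; lra.
Qed.

Lemma tight_extract (v : R -> \bar R) :
  (forall l, 0 <= v l)%E -> v @ +oo --> 0%E ->
  forall e : R, 0 < e -> exists2 K, 0 < K & (v K <= e%:E)%E.
Proof.
move=> v0 /fine_cvgP [hfin hc] e e0.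
have h := proj1 (cvgr0Pnorm_le _) hc e e0.
have hb : \forall x \near +oo, v x \is a fin_num /\ `|(fine \o v) x| <= e.
  by apply: filterS2 hfin (h _) => x a b; split.
have [K K0 [hK1 hK2]] := pinfty_ex hb.
exists K => //; rewrite -(fineK hK1) lee_fin.
by move: hK2; rewrite /= ger0_norm // fine_ge0.
Qed.

Lemma powR_large (nu L : R) : 0 < nu -> exists K0 : nat, forall Mn : nat,
  (K0 <= Mn)%N -> L <= Mn%:R `^ nu.
Proof.
move=> nu0; set L' := Num.max L 1.
set z := L' `^ nu^-1.
exists (Num.truncn z).+1 => Mn hMn.
have L'1 : 1 <= L' by rewrite le_max lexx orbT.
have z0 : 0 <= z by exact: powR_ge0.
have hz : z <= Mn%:R.
  have [_ h] := andP (truncn_itv z0).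
  by apply: (ltW (lt_le_trans h _)); rewrite ler_nat.
apply: (@le_trans _ _ L'); first by rewrite le_max lexx.
apply: (@le_trans _ _ (z `^ nu)); last by apply: ge0_ler_powR; rewrite ?nnegrE // ?ltW.
by rewrite /z -powRrM mulVf ?gt_eqF // powRr1 // (le_trans ler01).
Qed.
End cv.


Unset Implicit Arguments.

Theorem mainTheorem16 (d : measure_display) (T : measurableType d)
  (R : realType) (P : probability T R)
  (F : nat -> set (set T)) (M : nat -> nat)
  (U : nat -> nat -> T -> R) (V X Y : nat -> T -> R)
  (alpha : nat) (nu c C : R) (p : nat)
  (q : nat -> R -> T -> \bar R)
  (E : nat -> nat -> T -> \bar R) :
  (* the setting *)
  filtration F ->
  (forall N, (0 < M N)%N) ->
  (forall K, exists N0, forall N, (N0 <= N)%N -> (K <= M N)%N) ->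
  (forall N i, measurable_fun setT (U N i)) ->
  (forall N, cond_indep P (F N) (fun i : 'I_(M N) => U N i)) ->
  (forall N i, (i < M N)%N ->
     cond_exp_finite P (F N) (fun x => `|U N i x|%:E)) ->
  (forall N i, (i < M N)%N -> p = 2%N ->
     cond_exp_finite P (F N) (fun x => (U N i x ^+ 2)%:E)) ->
  (* V, X, Y nonnegative random variables *)
  (forall N x, 0 <= V N x) -> (forall N x, 0 <= X N x) ->
  (forall N x, 0 <= Y N x) ->
  (forall N, measurable_fun setT (Y N)) ->
  (* (i) *)
  (forall N, {ae P, forall x, forall i, (i < M N)%N ->
     `|U N i x| <= V N x + X N x * Y N x ^+ 2}) ->
  (* (ii) *)
  (forall N B, measurable B -> F N (V N @^-1` B)) ->
  (forall N B, measurable B -> F N (X N @^-1` B)) ->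
  cvg_in_prob0 P (fun N x => (V N x)%:E) ->
  tight P (fun N x => (X N x)%:E) ->
  (* (iii) *)
  (alpha = 1%N \/ alpha = 2%N) -> 0 < nu -> 0 < c -> 0 < C ->
  (forall N y, 0 < y ->
     is_cond_exp P (F N) (fun x => (\1_[set w | y <= Y N w] x)%:E) (q N y)) ->
  {ae P, forall x, forall N (y : R), 0 < y ->
     (q N y x <= (C * (M N)%:R
        * expR (- c * ((M N)%:R `^ nu) * y ^+ (2 * alpha)))%:E)%E} ->
  (* conclusion, for p in {1,2} *)
  (p = 1%N \/ p = 2%N) ->
  (forall N i, (i < M N)%N ->
     is_cond_exp P (F N) (fun x => (`|U N i x| ^+ p)%:E) (E N i)) ->
  tight P (fun N x => (\sum_(i < M N) E N i x)%E) ->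
  forall eps : R, 0 < eps ->
  forall g : nat -> nat -> T -> \bar R,
    (forall N i, (i < M N)%N ->
       is_cond_exp P (F N)
         (fun x => (`|U N i x| ^+ p * \1_[set w | eps <= `|U N i w|] x)%:E)
         (g N i)) ->
    cvg_in_prob0 P (fun N x => (\sum_(i < M N) g N i x)%E).
Proof.
move=> hF hM0 hMinf hU hind hfin1 hfin2 hV0 hX0 hY0 hYm hi hVF hXF hVcvg hXt
  halpha hnu hc hC hq hqb hp hE hEt eps heps g hg delta hdelta.
have n0 : (0 < 2 * alpha)%N by case: halpha => ->.
have sF N : Defs.sub_sigma_algebra (F N) := (proj1 hF) N.
apply: cvg0_crit => [N|e e0]; first exact: measure_ge0.
have e30 : 0 < e / 3 by rewrite divr_gt0.
have hsup0 : forall l : R, (0 <= ereal_sup [set P [set x | (l%:E <= (X N x)%:E)%E] | N in [set: nat]])%E.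
  move=> l; apply: le_trans (ereal_sup_ubound _); last by exists 0%N.
  exact: measure_ge0.
have [K K0 hK] := tight_extract hsup0 hXt e30.
have hXK N : (P [set x | (K%:E <= (X N x)%:E)%E] <= (e / 3)%:E)%E.
  by apply: le_trans hK; apply: ereal_sup_ubound; exists N.
set y0 := Num.sqrt (eps / (2 * K)).
have y00 : 0 < y0 by rewrite sqrtr_gt0 divr_gt0 ?mulr_gt0.
set b := y0 ^+ (2 * alpha).
have b0 : 0 < b by rewrite exprn_gt0.
set D := (1 + eps / 2 + K) ^+ 2.
have [c0 c00 hasym] := asym_real (a := c * b / 2) (divr_gt0 (mulr_gt0 hc b0) (ltr0Sn R 1)) hnu.
set Bc := delta^-1 * (2 * (D * expR 4) * C).
have [K1 hK1] := powR_large (10 * y0 / (c * b)) hnu.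
set K3 := maxn K1 (Num.truncn (Bc * c0 / (e / 3))).+1.
have [N0 hN0] := hMinf K3.
have hVe := cvg0_near (fun N => measure_ge0 P _) (hVcvg (eps / 2) (divr_gt0 heps (ltr0Sn R 1))) e30.
have hMe : \forall N \near \oo, (K3 <= M N)%N by exists N0.
apply: filterS2 hVe hMe => N hVN hMN.
have hMN1 : (K1 <= M N)%N by apply: leq_trans hMN; exact: leq_maxl.
have hMN2 : ((Num.truncn (Bc * c0 / (e / 3))).+1 <= M N)%N.
  by apply: leq_trans hMN; exact: leq_maxr.
set Mr := (M N)%:R : R.
have Mr1 : 1 <= Mr by rewrite /Mr ler1n hM0.
set m := Mr `^ nu.
have m0 : 0 < m by apply: powR_gt0; lra.
have h5 : 5 <= c * m * y0 ^+ (2 * alpha) / (2 * y0).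
  have := hK1 _ hMN1; rewrite -/Mr -/m -/b => hm.
  rewrite ler_pdivlMr ?mulr_gt0 //.
  have cb0 : 0 < c * b by rewrite mulr_gt0.
  have : 10 * y0 <= m * (c * b) by rewrite -ler_pdivrMr.
  lra.
have mV : measurable_fun setT (V N).
  by move=> _ B mB; rewrite setTI; apply: sigma_meas (sF N) _; exact: hVF.
have mX : measurable_fun setT (X N).
  by move=> _ B mB; rewrite setTI; apply: sigma_meas (sF N) _; exact: hXF.
set G := [set x | V N x < eps / 2] `&` [set x | X N x < K].
have FG : F N G.
  apply: sigmaI => //.
    rewrite (_ : [set x | V N x < eps / 2] = V N @^-1` `]-oo, (eps / 2)[); first exact: hVF.
    by apply/seteqP; split => x /=; rewrite in_itv.
  rewrite (_ : [set x | X N x < K] = X N @^-1` `]-oo, K[); first exact: hXF.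
  by apply/seteqP; split => x /=; rewrite in_itv.
have mG : measurable G := sigma_meas (sF N) FG.
have mg i : (i < M N)%N -> measurable_fun setT (g N i).
  by move=> hi'; exact: Gmeas_mfun (sF N) (proj1 (hg N i hi')).
have mS : measurable_fun setT (fun x => (\sum_(i < M N) g N i x)%E).
  by apply: emeasurable_sum => i; exact: mg.
apply: le_trans (markov_split P mG mS hdelta) _.
have hcomp : (P (~` G) <= (e / 3 + e / 3)%:E)%E.
  set A1 := [set x | ((eps / 2)%:E <= `|(V N x)%:E|)%E].
  set A2 := [set x | (K%:E <= (X N x)%:E)%E].
  have mA1 : measurable A1.
    rewrite /A1 -[X in measurable X]setTI.
    by apply: emeasurable_fun_c_infty => //; apply: measurableT_comp => //; exact: measurableT_comp.
  have mA2 : measurable A2.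
    rewrite /A2 -[X in measurable X]setTI.
    by apply: emeasurable_fun_c_infty => //; exact: measurableT_comp.
  apply: (@le_trans _ _ (P (A1 `|` A2))).
    apply: le_measure; rewrite ?inE; [exact: measurableC|exact: measurableU|].
    move=> x /=; rewrite /G /setI /= => hx.
    have [hv|hv] := leP (eps / 2) (V N x).
      by left; rewrite /A1 /= lee_fin ger0_norm.
    right; rewrite /A2 /= lee_fin; apply/negPn/negP => hx2.
    by apply: hx; split => //; rewrite ltNge.
  apply: le_trans (measureU2 _ mA1 mA2) _.
  by rewrite EFinD; apply: leeD => //; exact: hXK.
set Bnd := 2 * (D * expR 4) * C * Mr * expR (- (c * m * y0 ^+ (2 * alpha) / 2)).
have hbi i : (i < M N)%N -> (\int[P]_(x in G) `|g N i x| <= Bnd%:E)%E.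
  move=> hiM.
  have Xf0 : forall x, (0 <= (`|U N i x| ^+ p * \1_[set w | eps <= `|U N i w|] x)%:E)%E.
    by move=> x; rewrite lee_fin mulr_ge0 ?exprn_ge0.
  have [A' [FA' A'G ->]] := cond_abs (sF N) Xf0 (hg N i hiM) FG.
  apply: (@tail_bound _ _ _ P (U N i) (V N) (X N) (Y N) (q N) A' eps K C c m Mr p (2 * alpha)) => //.
  - exact: sigma_meas (sF N) FA'.
  - by move=> y hy; exact: Gmeas_mfun (sF N) (proj1 (hq N y hy)).
  - by apply: filterS (hi N) => x hx; exact: hx i hiM.
  - by move=> y hy; exact: esym ((proj2 (hq N y hy)) A' FA').
  - by apply: filterS hqb => x hx y hy; exact: hx N y hy.
have hint : (\int[P]_(x in G) `|\sum_(i < M N) g N i x| <= (Mr * Bnd)%:E)%E.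
  apply: (@le_trans _ _ (\sum_(i < M N) \int[P]_(x in G) `|g N i x|)%E).
    rewrite -ge0_integral_sum //; last first.
      by move=> i; apply: measurable_funS (measurableT_comp _ (mg i (ltn_ord i))).
    apply: ge0_le_integral => //.
    - by apply: measurable_funS (measurableT_comp _ mS).
    - apply: measurable_funS (_ : measurable_fun setT _) => //.
      by apply: emeasurable_sum => i; exact: measurableT_comp _ (mg i (ltn_ord i)).
    - by move=> x _; exact: lee_abs_sum.
  have hs : (\sum_(i < M N) \int[P]_(x in G) `|g N i x| <= \sum_(i < M N) Bnd%:E)%E.
    by apply: lee_sum => i _; exact: hbi i (ltn_ord i).
  apply: le_trans hs _.
  by rewrite sumEFin sumr_const card_ord -mulr_natl.
have hreal : delta^-1 * (Mr * Bnd) <= e / 3.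
  have harg : c * m * y0 ^+ (2 * alpha) / 2 = c * b / 2 * Mr `^ nu by rewrite /m /b; ring.
  have Mr0 : 0 < Mr by lra.
  have Bc0 : 0 <= Bc.
    have D0 : 0 <= D by rewrite /D exprn_ge0 //; have := divr_gt0 heps (ltr0Sn R 1); lra.
    apply: mulr_ge0; first by rewrite invr_ge0 ltW.
    apply: mulr_ge0; last exact: ltW.
    by apply: mulr_ge0 => //; apply: mulr_ge0 => //; exact: expR_ge0.
  apply: (@le_trans _ _ (Bc * (c0 / Mr))).
    rewrite /Bnd harg.
    have -> : delta^-1 * (Mr * (2 * (D * expR 4) * C * Mr * expR (- (c * b / 2 * Mr `^ nu)))) =
      Bc * (Mr ^+ 2 * expR (- (c * b / 2 * Mr `^ nu))) by rewrite /Bc; ring.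
    by apply: ler_wpM2l => //; exact: hasym.
  set z := Bc * c0 / (e / 3).
  have z0 : 0 <= z by apply: divr_ge0; [exact: mulr_ge0 Bc0 (ltW c00)|exact: ltW].
  have hz : z <= Mr.
    have [_ h] := andP (truncn_itv z0).
    by apply: ltW (lt_le_trans h _); rewrite /Mr ler_nat.
  rewrite mulrA ler_pdivrMr //.
  move: hz; rewrite /z ler_pdivrMr //.
  lra.
apply: le_trans (leeD hcomp (lee_wpmul2l _ hint)) _; first by rewrite lee_fin invr_ge0 ltW.
by rewrite -EFinM -EFinD lee_fin; lra.
Qed.
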